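(* Let $n\ge 3$ be an odd integer and $(\mathcal{C},\Sigma)$ an $n$-angulated category. For a subgroup $H$ of $K_0(\mathcal{C})$, let $\mathcal{A}_H$ be the full subcategory of $\mathcal{C}$ consisting of the objects $A$ with $[A]\in H$. Declare the $n$-angles of $\mathcal{A}_H$ to be those $n$-angles of $\mathcal{C}$ all of whose objects lie in $\mathcal{A}_H$. Then $(\mathcal{A}_H,\Sigma)$ is a complete and dense $n$-angulated subcategory of $(\mathcal{C},\Sigma)$.
   Context: All categories are small. Fix an integer $n\ge 3$. Let $\mathcal{C}$ be an additive category with an automorphism $\Sigma$. An $n$-$\Sigma$-sequence in $\mathcal{C}$ is a diagram $A_1\xrightarrow{\alpha_1}A_2\xrightarrow{\alpha_2}\cdots\xrightarrow{\alpha_{n-1}}A_n\xrightarrow{\alpha_n}\Sigma A_1$. Its left rotation is $A_2\xrightarrow{\alpha_2}\cdots\xrightarrow{\alpha_n}\Sigma A_1\xrightarrow{(-1)^n\Sigma\alpha_1}\Sigma A_2$. A morphism from $(A_\bullet,\alpha)$ to $(B_\bullet,\beta)$ is a tuple $(\varphi_1,\dots,\varphi_n)$, $\varphi_i:A_i\to B_i$, with $\beta_i\varphi_i=\varphi_{i+1}\alpha_i$ for $1\le i\le n-1$ and $\beta_n\varphi_n=(\Sigma\varphi_1)\alpha_n$; it is an isomorphism if all $\varphi_i$ are isomorphisms. Direct sums of sequences are taken termwise. $(\mathcal{C},\Sigma)$ is $n$-angulated if it is equipped with a collection $\mathscr N$ of $n$-$\Sigma$-sequences, called $n$-angles, such that: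 (N1)(a) $\mathscr N$ is closed under direct sums, direct summands and isomorphisms of $n$-$\Sigma$-sequences; (b) for every object $A$, the trivial sequence $A\xrightarrow{1}A\to0\to\cdots\to0\to\Sigma A$ is in $\mathscr N$; (c) every morphism $A_1\to A_2$ is the first morphism of some $n$-angle; (N2) an $n$-$\Sigma$-sequence is in $\mathscr N$ iff its left rotation is; (N3) given $n$-angles $(A_\bullet,\alpha),(B_\bullet,\beta)$ and $\varphi_1:A_1\to B_1$, $\varphi_2:A_2\to B_2$ with $\beta_1\varphi_1=\varphi_2\alpha_1$, there exist $\varphi_3,\dots,\varphi_n$ making $(\varphi_1,\dots,\varphi_n)$ a morphism; (N4) in (N3) the $\varphi_i$ can be chosen so that the mapping cone $A_2\oplus B_1\to A_3\oplus B_2\to\cdots\to\Sigma A_1\oplus B_n\to\Sigma A_2\oplus\Sigma B_1$, with maps $\left[\begin{smallmatrix}-\alpha_{i+1}&0\\ \varphi_{i+1}&\beta_i\end{smallmatrix}\right]$ ($1\le i\le n-1$) and last map $\left[\begin{smallmatrix}-\Sigma\alpha_1&0\\ \Sigma\varphi_1&\beta_n\end{smallmatrix}\right]$, is an $n$-angle. Grothendieck group: $F(\mathcal{C})$ is the free abelian group on isomorphism classes $\langle A\rangle$ of objects; for an $n$-angle $A_\bullet$, $\chi(A_\bullet)=\sum_{i=1}^n(-1)^{i+1}\langle A_i\rangle$; $R(\mathcal{C})$ is generated by all $\chi(A_\bullet)$, together with $\langle 0\rangle$ when $n$ is even; $K_0(\mathcal{C})=F(\mathcal{C})/R(\mathcal{C})$,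 $[A]$ the class of $\langle A\rangle$. An additive functor $L:\mathcal{C}\to\mathcal{C}'$ between $n$-angulated categories is $n$-angulated if there is a natural isomorphism $\eta:L\circ\Sigma\to\Sigma'\circ L$ such that $L$ sends each $n$-angle $(A_\bullet,\alpha)$ to the $n$-angle $L A_1\xrightarrow{L\alpha_1}\cdots\xrightarrow{L\alpha_{n-1}}LA_n\xrightarrow{\eta\circ L\alpha_n}\Sigma'LA_1$. An $n$-angulated subcategory of $(\mathcal{C},\Sigma)$ is a full subcategory $\mathcal{A}$, closed under isomorphisms, on which $\Sigma$ restricts to an automorphism, equipped with $n$-angles making $(\mathcal{A},\Sigma)$ $n$-angulated, such that the inclusion $\mathcal{A}\to\mathcal{C}$ is $n$-angulated. $\mathcal{A}$ is dense if every object of $\mathcal{C}$ is a direct summand of an object of $\mathcal{A}$; complete if whenever an $n$-angle $A_1\to\cdots\to A_n\to\Sigma A_1$ in $\mathcal{C}$ has $n-1$ of $A_1,\dots,A_n$ in $\mathcal{A}$, the remaining one is in $\mathcal{A}$. *)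

(* Defs.v *)
From HB Require Import structures.
From mathcomp Require Import all_boot all_algebra.

Set Implicit Arguments.
Unset Strict Implicit.
Unset Printing Implicit Defensive.

Import GRing.Theory.

Record addcat := AddCat {
  Obj :> Type;
  Hom : Obj -> Obj -> zmodType;
  comp : forall a b c : Obj, Hom b c -> Hom a b -> Hom a c;
  idm : forall a : Obj, Hom a a;
  compA : forall a b c d (h : Hom c d) (g : Hom b c) (f : Hom a b),
      comp h (comp g f) = comp (comp h g) f;
  comp1m : forall a b (f : Hom a b), comp (idm b) f = f;
  compm1 : forall a b (f : Hom a b), comp f (idm a) = f;
  compDl : forall a b c (g g' : Hom b c) (f : Hom a b),
      (comp (g + g') f = comp g f + comp g' f)%R;
  compDr : forall a b c (g : Hom b c) (f f' : Hom a b),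
      (comp g (f + f') = comp g f + comp g f')%R;
  zero_ob : Obj;
  zero_ob_id : idm zero_ob = 0%R;
  bp : Obj -> Obj -> Obj;
  bp_inl : forall a b, Hom a (bp a b);
  bp_inr : forall a b, Hom b (bp a b);
  bp_pl : forall a b, Hom (bp a b) a;
  bp_pr : forall a b, Hom (bp a b) b;
  bp_ll : forall a b, comp (bp_pl a b) (bp_inl a b) = idm a;
  bp_rr : forall a b, comp (bp_pr a b) (bp_inr a b) = idm b;
  bp_lr : forall a b, comp (bp_pl a b) (bp_inr a b) = 0%R;
  bp_rl : forall a b, comp (bp_pr a b) (bp_inl a b) = 0%R;
  bp_id : forall a b, (comp (bp_inl a b) (bp_pl a b)
                      + comp (bp_inr a b) (bp_pr a b))%R = idm (bp a b)
}.

Arguments Hom {_}.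
Arguments comp {_ _ _ _} _ _.
Arguments idm {_}.
Arguments zero_ob {_}.
Arguments bp {_}.
Arguments bp_inl {_}.
Arguments bp_inr {_}.
Arguments bp_pl {_}.
Arguments bp_pr {_}.

Record autom (C : addcat) := Autom {
  So : C -> C;
  Sm : forall a b : C, Hom a b -> Hom (So a) (So b);
  Sm_comp : forall a b c (g : Hom b c) (f : Hom a b),
      Sm (comp g f) = comp (Sm g) (Sm f);
  Sm_id : forall a, Sm (idm a) = idm (So a);
  Sm_add : forall a b (f g : Hom a b), (Sm (f + g) = Sm f + Sm g)%R;
  So_bij : bijective So;
  Sm_bij : forall a b, bijective (@Sm a b)
}.

Arguments So {_}.
Arguments Sm {_} _ {_ _}.

Section NAngulated.
Variables (n : nat) (C : addcat) (Sg : autom C).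

Local Notation S := (So Sg).
Local Notation Sh := (Sm Sg).

Definition isoObj (a b : C) : Prop :=
  exists (f : Hom a b) (g : Hom b a), comp g f = idm a /\ comp f g = idm b.

Definition isoH (a b : C) (f : Hom a b) : Prop :=
  exists g : Hom b a, comp g f = idm a /\ comp f g = idm b.

Definition Arr : Type := {a : C & {b : C & Hom a b}}.
Definition mkA (a b : C) (f : Hom a b) : Arr := existT _ a (existT _ b f).
Definition dom (x : Arr) : C := projT1 x.
Definition cod (x : Arr) : C := projT1 (projT2 x).
Definition SA (x : Arr) : Arr := mkA (Sh (projT2 (projT2 x))).
Definition negA (x : Arr) : Arr := mkA (- projT2 (projT2 x))%R.

(* An n-Sigma-sequence A_1 -a_1-> A_2 -> ... -> A_n -a_n-> Sigma A_1 is
   encoded (0-based) as X : nat -> Arr with X i = a_{i+1} for i < n;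
   entries X i with i >= n are irrelevant. *)
Definition nsseq : Type := nat -> Arr.
Definition obj (X : nsseq) (i : nat) : C := dom (X i).

Definition is_nseq (X : nsseq) : Prop :=
  (forall i, i.+1 < n -> cod (X i) = dom (X i.+1)) /\
  cod (X n.-1) = S (dom (X 0)).

Definition inP (P : C -> Prop) (X : nsseq) : Prop :=
  forall i, i < n -> P (obj X i).

Definition rot (X : nsseq) : nsseq := fun i =>
  if i.+1 < n then X i.+1
  else if odd n then negA (SA (X 0)) else SA (X 0).

Definition commsq (f g h k : Arr) : Prop :=
  exists (a b c d : C) (f' : Hom a b) (g' : Hom b d) (h' : Hom a c)
         (k' : Hom c d),
    [/\ f = mkA f', g = mkA g', h = mkA h', k = mkA k' &
        comp g' f' = comp k' h'].

(* Morphisms (phi_1, ..., phi_n) of n-Sigma-sequences (phi i = phi_{i+1}). *)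
Definition seqmor (X Y : nsseq) (phi : nat -> Arr) : Prop :=
  [/\ forall i, i < n -> dom (phi i) = obj X i /\ cod (phi i) = obj Y i,
      forall i, i.+1 < n -> commsq (X i) (phi i.+1) (phi i) (Y i) &
      commsq (X n.-1) (SA (phi 0)) (phi n.-1) (Y n.-1)].

Definition isoA (x : Arr) : Prop :=
  exists (a b : C) (f : Hom a b), x = mkA f /\ isoH f.

Definition seqiso (X Y : nsseq) (phi : nat -> Arr) : Prop :=
  seqmor X Y phi /\ forall i, i < n -> isoA (phi i).

Definition bpmap (a a' b b' : C) (f : Hom a a') (g : Hom b b')
  : Hom (bp a b) (bp a' b') :=
  (comp (bp_inl a' b') (comp f (bp_pl a b))
  + comp (bp_inr a' b') (comp g (bp_pr a b)))%R.

Definition bpmapS (a b a0 b0 : C) (f : Hom a (S a0)) (g : Hom b (S b0))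
  : Hom (bp a b) (S (bp a0 b0)) :=
  (comp (Sh (bp_inl a0 b0)) (comp f (bp_pl a b))
  + comp (Sh (bp_inr a0 b0)) (comp g (bp_pr a b)))%R.

Definition dsum (X Y Z : nsseq) : Prop :=
  (forall i, i.+1 < n -> exists (a a' b b' : C) (f : Hom a a') (g : Hom b b'),
      [/\ X i = mkA f, Y i = mkA g & Z i = mkA (bpmap f g)]) /\
  (exists (a b a0 b0 : C) (f : Hom a (S a0)) (g : Hom b (S b0)),
      [/\ a0 = obj X 0, b0 = obj Y 0, X n.-1 = mkA f, Y n.-1 = mkA g &
          Z n.-1 = mkA (bpmapS f g)]).

Definition triv (z A : C) : nsseq := fun i =>
  if i == 0%N then mkA (idm A)
  else if i == 1%N then mkA (0%R : Hom A z)
  else if i.+1 < n then mkA (0%R : Hom z z)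
  else mkA (0%R : Hom z (S A)).

Definition mat3 (a a' b b' : C) (al : Hom a a') (ph : Hom a b') (be : Hom b b')
  : Hom (bp a b) (bp a' b') :=
  (comp (bp_inl a' b') (comp (- al) (bp_pl a b))
  + comp (bp_inr a' b') (comp ph (bp_pl a b))
  + comp (bp_inr a' b') (comp be (bp_pr a b)))%R.

Definition matS (a1 a2 b1 bn : C) (al : Hom a1 a2) (ph : Hom a1 b1)
  (be : Hom bn (S b1)) : Hom (bp (S a1) bn) (S (bp a2 b1)) :=
  (comp (Sh (bp_inl a2 b1)) (comp (- Sh al) (bp_pl (S a1) bn))
  + comp (Sh (bp_inr a2 b1)) (comp (Sh ph) (bp_pl (S a1) bn))
  + comp (Sh (bp_inr a2 b1)) (comp be (bp_pr (S a1) bn)))%R.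

Definition cone (X Y : nsseq) (phi : nat -> Arr) (Z : nsseq) : Prop :=
  (forall j, j.+1 < n ->
     exists (a a' b b' : C) (al : Hom a a') (ph : Hom a b') (be : Hom b b'),
       [/\ X j.+1 = mkA al, phi j.+1 = mkA ph, Y j = mkA be &
           Z j = mkA (mat3 al ph be)]) /\
  (exists (a1 a2 b1 bn : C) (al : Hom a1 a2) (ph : Hom a1 b1)
          (be : Hom bn (S b1)),
     [/\ X 0 = mkA al, phi 0 = mkA ph, Y n.-1 = mkA be &
         Z n.-1 = mkA (matS al ph be)]).

(* (P, Sigma) is an n-angulated (full, additive) subcategory with n-angles N;
   for C itself take P := fun _ => True. *)
Record nangulated (P : C -> Prop) (N : nsseq -> Prop) : Prop := {
  na_zero : exists z, P z /\ idm z = 0%R;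
  na_bp : forall a b, P a -> P b -> P (bp a b);
  na_S : forall a, P a -> P (S a);
  na_Sinv : forall b, P b -> exists a, P a /\ S a = b;
  na_seq : forall X, N X -> is_nseq X /\ inP P X;
  na_dsum : forall X Y Z, N X -> N Y -> dsum X Y Z -> N Z;
  na_summand : forall X Y Z, is_nseq X -> is_nseq Y -> inP P X -> inP P Y ->
      dsum X Y Z -> N Z -> N X /\ N Y;
  na_iso : forall X Y phi, inP P Y -> N X -> seqiso X Y phi -> N Y;
  na_triv : forall z A, P z -> idm z = 0%R -> P A -> N (triv z A);
  na_ext : forall (a b : C) (f : Hom a b), P a -> P b ->
      exists X, N X /\ X 0 = mkA f;
  na_rot : forall X, is_nseq X -> inP P X -> (N X <-> N (rot X));
  na_mor : forall X Y (f0 f1 : Arr), N X -> N Y ->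
      dom f0 = obj X 0 -> cod f0 = obj Y 0 ->
      dom f1 = obj X 1 -> cod f1 = obj Y 1 ->
      commsq (X 0) f1 f0 (Y 0) ->
      exists phi, [/\ phi 0 = f0, phi 1%N = f1 & seqmor X Y phi];
  na_cone : forall X Y (f0 f1 : Arr), N X -> N Y ->
      dom f0 = obj X 0 -> cod f0 = obj Y 0 ->
      dom f1 = obj X 1 -> cod f1 = obj Y 1 ->
      commsq (X 0) f1 f0 (Y 0) ->
      exists phi Z, [/\ phi 0 = f0, phi 1%N = f1, seqmor X Y phi,
                        cone X Y phi Z & N Z]
}.

Definition etaseq (eta : forall a : C, Hom (S a) (S a)) (X Y : nsseq) : Prop :=
  (forall i, i.+1 < n -> Y i = X i) /\
  exists (c a : C) (h : Hom c (S a)),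
    X n.-1 = mkA h /\ Y n.-1 = mkA (comp (eta a) h).

Record nang_subcat (N : nsseq -> Prop) (P : C -> Prop) (NA : nsseq -> Prop)
  : Prop := {
  sub_isoclosed : forall a b, isoObj a b -> P a -> P b;
  sub_nang : nangulated P NA;
  sub_incl : exists eta : forall a : C, Hom (S a) (S a),
      [/\ forall a, P a -> isoH (eta a),
          forall (a b : C) (f : Hom a b), P a -> P b ->
            comp (eta b) (Sh f) = comp (Sh f) (eta a) &
          forall X Y, NA X -> etaseq eta X Y -> N Y]
}.

Definition complete (N : nsseq -> Prop) (P : C -> Prop) : Prop :=
  forall X, N X -> forall j, j < n ->
    (forall i, i < n -> i != j -> P (obj X i)) -> P (obj X j).

Definition dense (P : C -> Prop) : Prop :=
  forall c : C, exists a d : C, P a /\ isoObj a (bp c d).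

(* Grothendieck group, via its universal property:
   chi(X) = sum_i (-1)^(i+1) <A_i>  (1-based)  = sum_i (-1)^i <obj X i> (0-based). *)
Definition chi (K : zmodType) (f : C -> K) (X : nsseq) : K :=
  (\sum_(i < n) (if odd i then - f (obj X i) else f (obj X i)))%R.

Definition K0rel (N : nsseq -> Prop) (K : zmodType) (f : C -> K) : Prop :=
  [/\ forall a b, isoObj a b -> f a = f b,
      forall X, N X -> chi f X = 0%R &
      ~~ odd n -> f zero_ob = 0%R].

(* (K, cls) is K_0(C) = F(C)/R(C) with cls A = [A]. *)
Definition is_K0 (N : nsseq -> Prop) (K : zmodType) (cls : C -> K) : Prop :=
  K0rel N cls /\
  forall (G : zmodType) (g : C -> G), K0rel N g ->
    exists! h : K -> G,
      (forall x y, h (x - y)%R = (h x - h y)%R) /\ (forall a, h (cls a) = g a).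

End NAngulated.

(* Main.v *)
Require Import Defs.
From HB Require Import structures.
From mathcomp Require Import all_boot all_algebra.
From mathcomp Require Import zify.

Set Implicit Arguments.
Unset Strict Implicit.
Unset Printing Implicit Defensive.
Import GRing.Theory.
Local Open Scope ring_scope.
Local Notation comp := Defs.comp (only parsing).
Local Notation Hom := Defs.Hom (only parsing).

Section Cat.
Variable C : addcat.

Lemma comp0m (a b c : C) (f : Hom a b) : comp (0 : Hom b c) f = 0.
Proof. have h := compDl (0 : Hom b c) 0 f; rewrite addr0 in h.
by apply: (@addrI _ (comp (0 : Hom b c) f)); rewrite addr0 -h. Qed.

Lemma compm0 (a b c : C) (g : Hom b c) : comp g (0 : Hom a b) = 0.
Proof. have h := compDr g (0 : Hom a b) 0; rewrite addr0 in h.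
by apply: (@addrI _ (comp g (0 : Hom a b))); rewrite addr0 -h. Qed.

Lemma zero_from (z b : C) (f : Hom z b) : idm z = 0 -> f = 0.
Proof. by move=> hz; rewrite -(compm1 f) hz compm0. Qed.

Lemma zero_to (a z : C) (f : Hom a z) : idm z = 0 -> f = 0.
Proof. by move=> hz; rewrite -(comp1m f) hz comp0m. Qed.

Lemma iso_refl (a : C) : isoObj a a.
Proof. by exists (idm a), (idm a); rewrite comp1m. Qed.

Lemma iso_sym (a b : C) : isoObj a b -> isoObj b a.
Proof. by case=> f [g [h1 h2]]; exists g, f. Qed.

Lemma iso_zero (a b : C) : idm a = 0 -> idm b = 0 -> isoObj a b.
Proof.
move=> ha hb; exists 0, 0; split; first by rewrite ha; apply: zero_from.
by rewrite hb; apply: zero_from.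
Qed.

Lemma inl_pl (a z : C) : idm z = 0 -> comp (bp_inl a z) (bp_pl a z) = idm (bp a z).
Proof.
move=> hz; rewrite -bp_id (zero_to (bp_pr a z) hz) compm0 addr0 //.
Qed.

Lemma inr_pr (z a : C) : idm z = 0 -> comp (bp_inr z a) (bp_pr z a) = idm (bp z a).
Proof.
move=> hz; rewrite -bp_id (zero_to (bp_pl z a) hz) compm0 add0r //.
Qed.

Lemma iso_bpz (a z : C) : idm z = 0 -> isoObj (bp a z) a.
Proof. move=> hz; exists (bp_pl a z), (bp_inl a z); split; [exact: inl_pl | exact: bp_ll]. Qed.

Lemma iso_zbp (z a : C) : idm z = 0 -> isoObj (bp z a) a.
Proof. move=> hz; exists (bp_pr z a), (bp_inr z a); split; [exact: inr_pr | exact: bp_rr]. Qed.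

Lemma arr_eta (x : Arr C) : x = mkA (projT2 (projT2 x)).
Proof. by case: x => a [b f]. Qed.



Lemma commsq_intro (a b c d : C) (f : Hom a b) (g : Hom b d) (h : Hom a c) (k : Hom c d) :
  comp g f = comp k h -> commsq (mkA f) (mkA g) (mkA h) (mkA k).
Proof. by move=> e; exists a, b, c, d, f, g, h, k. Qed.

Lemma commsq_id (x : Arr C) : commsq x (mkA (idm (cod x))) (mkA (idm (dom x))) x.
Proof. case: x => a [b f] /=; apply: commsq_intro; by rewrite comp1m compm1. Qed.

Lemma isoA_idm (a : C) : isoA (mkA (idm a)).
Proof. by exists a, a, (idm a); split=> //; exists (idm a); rewrite comp1m. Qed.

End Cat.

Section Main.
Variables (n : nat) (C : addcat) (Sg : autom C) (N : nsseq C -> Prop)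
  (K : zmodType) (cls : C -> K) (H : {pred K}).
Hypotheses (hn : (3 <= n)%N) (hodd : odd n)
  (hN : nangulated n Sg (fun _ => True) N) (hK : K0rel n N cls)
  (hH : GRing.zmod_closed H).

Local Notation S := (So Sg).
Local Notation Sh := (Sm Sg).
Local Notation rotn := (Defs.rot n Sg).

Definition sg (i : nat) (x : K) := if odd i then - x else x.

Lemma chiE X : chi n cls X = \sum_(i < n) sg i (cls (obj X i)).
Proof. by []. Qed.

Lemma sgD i x y : sg i (x + y) = sg i x + sg i y.
Proof. by rewrite /sg; case: (odd i); rewrite ?opprD. Qed.

Lemma sg0 i : sg i 0 = 0.
Proof. by rewrite /sg; case: (odd i); rewrite ?oppr0. Qed.

Lemma sum_sg_const m x : \sum_(i < m) sg i x = if odd m then x else 0.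
Proof.
elim: m => [|m IH]; first by rewrite big_ord0.
rewrite big_ord_recr /= IH /sg /=; case: (odd m) => /=.
  by rewrite subrr. by rewrite add0r.
Qed.

Lemma sum_e j x : (j < n)%N ->
  \sum_(i < n) sg i (if nat_of_ord i == j then x else 0) = sg j x.
Proof.
move=> hj; rewrite (bigD1 (Ordinal hj)) //= eqxx big1 ?addr0 // => i hi.
have -> : (nat_of_ord i == j) = false.
  by apply/negbTE; apply: contra hi => /eqP e; apply/eqP; apply: val_inj.
exact: sg0.
Qed.

Lemma H0 : 0 \in H. Proof. by case: hH. Qed.
Lemma HB x y : x \in H -> y \in H -> x - y \in H.
Proof. by case: hH => _ h; apply: h. Qed.
Lemma HN x : x \in H -> - x \in H.
Proof. by move=> hx; rewrite -sub0r; apply: HB => //; exact: H0. Qed.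
Lemma HNr x : - x \in H -> x \in H.
Proof. by move=> hx; rewrite -(opprK x); apply: HN. Qed.
Lemma HD x y : x \in H -> y \in H -> x + y \in H.
Proof. by move=> hx hy; rewrite -(opprK y); apply: HB => //; apply: HN. Qed.
Lemma Hsg i x : (sg i x \in H) = (x \in H).
Proof. rewrite /sg; case: (odd i) => //; apply/idP/idP; [apply: HNr | apply: HN]. Qed.
Lemma Hsum (I : finType) (P : pred I) (F : I -> K) :
  (forall i, P i -> F i \in H) -> \sum_(i | P i) F i \in H.
Proof. move=> h; apply: (big_ind (fun x => x \in H)) => //; [exact: H0| exact: HD]. Qed.

Lemma obj_rot X i : obj (rotn X) i = if (i.+1 < n)%N then obj X i.+1 else S (obj X 0).
Proof. by rewrite /obj /Defs.rot; case: ifP => //; case: (odd n). Qed.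

Lemma cod_rot X i : cod (rotn X i) = if (i.+1 < n)%N then cod (X i.+1) else S (cod (X 0)).
Proof. by rewrite /Defs.rot; case: ifP => //; case: (odd n). Qed.

Lemma is_nseq_rot X : is_nseq n Sg X -> is_nseq n Sg (rotn X).
Proof.
case=> h1 h2; split.
  move=> i hi; rewrite cod_rot hi.
  change (dom (rotn X i.+1)) with (obj (rotn X) i.+1); rewrite obj_rot.
  case: ifP => hi2; first exact: h1.
  have -> : i.+1 = n.-1 by move/negbT: hi2; rewrite -leqNgt => hi2; lia.
  exact: h2.
have e : n.-1.+1 = n by lia.
rewrite cod_rot e ltnn.
have := obj_rot X 0; rewrite /obj => ->.
by rewrite (h1 0) ?(leq_trans _ hn).
Qed.

Lemma obj_iter X j i : (j <= n)%N -> (i < n)%N ->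
  obj (iter j rotn X) i = if (i + j < n)%N then obj X (i + j) else S (obj X (i + j - n)).
Proof.
elim: j i => [|j IH] i hj hi; first by rewrite addn0 hi.
rewrite iterS obj_rot; case: ifP => hi1.
  by rewrite IH ?(ltnW hj) // addSnnS.
have h0 : (0 < n)%N by lia.
rewrite (IH 0%N (ltnW hj) h0) add0n hj.
move/negbT: hi1; rewrite -leqNgt => hi1.
have -> : (i + j.+1 < n)%N = false by apply/negbTE; rewrite -leqNgt; lia.
have -> : (i + j.+1 - n = j)%N by lia.
by [].
Qed.

Lemma obj_triv z A i : obj (triv n Sg z A) i = if (i <= 1)%N then A else z.
Proof. by rewrite /obj /triv; case: i => [|[|i]] //=; case: ifP. Qed.

Lemma is_nseq_triv z A : is_nseq n Sg (triv n Sg z A).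
Proof.
split.
  move=> i hi; rewrite -/(obj _ _) obj_triv /triv.
  case: i hi => [|[|i]] //= hi; rewrite hi //.
rewrite -/(obj _ _) obj_triv /= /triv.
have e : n.-1.+1 = n by lia.
have h2 : (2 <= n.-1)%N by lia.
move: e; case: (n.-1) h2 => [|[|m]] //= _ ->; by rewrite ltnn.
Qed.

Lemma N_seq X : N X -> is_nseq n Sg X.
Proof. by move=> h; case: (na_seq hN h). Qed.

Lemma N_rot X : N X -> N (rotn X).
Proof. move=> h; by apply/(na_rot hN (N_seq h)). Qed.

Lemma N_iter X j : N X -> N (iter j rotn X).
Proof. by move=> h; elim: j => //= j IH; apply: N_rot. Qed.

Lemma cls_iso a b : isoObj a b -> cls a = cls b.
Proof. by case: hK => h _ _; apply: h. Qed.

Lemma cls_chi X : N X -> \sum_(i < n) sg i (cls (obj X i)) = 0.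
Proof. by case: hK => _ h _; apply: h. Qed.

Lemma clsz z : idm z = 0 -> cls z = 0.
Proof.
move=> hz; have := cls_chi (na_triv hN (z:=z) (A:=z) I hz I).
under eq_bigr => i _ do rewrite obj_triv if_same.
by rewrite sum_sg_const hodd.
Qed.

Lemma cls0 : cls zero_ob = 0.
Proof. exact: clsz (zero_ob_id C). Qed.

Lemma sg_last x : sg n.-1 x = x.
Proof. rewrite /sg; have -> : odd n.-1 = false. by move: hodd; case: n => //= m; case: (odd m). by []. Qed.

Lemma clsS a : cls (S a) = - cls a.
Proof.
have hX := N_rot (na_triv hN (z:=zero_ob) (A:=a) I (zero_ob_id C) I).
have hv : forall i : 'I_n, cls (obj (rotn (triv n Sg zero_ob a)) i) =
   (if nat_of_ord i == 0%N then cls a else 0) + (if nat_of_ord i == n.-1 then cls (S a) else 0).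
  case=> i hi /=; rewrite obj_rot obj_triv.
  case: (ltnP i.+1 n) => h1.
    have e1 : (i == n.-1) = false by apply/negbTE; lia.
    rewrite e1; case: (ltnP i 1) => h2.
      have -> : (i == 0%N) = true by lia.
      by rewrite addr0.
    have -> : (i == 0%N) = false by apply/negbTE; lia.
    by rewrite cls0 addr0.
  have -> : (i == n.-1) = true by apply/eqP; lia.
  have -> : (i == 0%N) = false by apply/negbTE; lia.
  by rewrite obj_triv /= add0r.
have := cls_chi hX.
under eq_bigr => i _ do rewrite hv sgD.
rewrite big_split /= !sum_e; try lia.
rewrite sg_last /sg /= => /eqP; rewrite addrC addr_eq0 => /eqP //.
Qed.

Definition castS (x : Arr C) (c : C) (e : cod x = S c) : Hom (dom x) (S c) :=
  match e in _ = t return Hom (dom x) t with erefl => projT2 (projT2 x) end.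

Lemma castS_eq (x : Arr C) (c : C) (e : cod x = S c) : x = mkA (castS e).
Proof. case: x e => a [b f]; rewrite /cod /= => e; subst b; by []. Qed.

Definition Zg (X Y : nsseq C) (i : nat) : Arr C :=
  mkA (bpmap (projT2 (projT2 (X i))) (projT2 (projT2 (Y i)))).

Definition dsumZ (X Y : nsseq C) (eX : cod (X n.-1) = S (obj X 0%N))
  (eY : cod (Y n.-1) = S (obj Y 0%N)) (i : nat) : Arr C :=
  if (i.+1 < n)%N then Zg X Y i else mkA (bpmapS (castS eX) (castS eY)).

Lemma dsumZ_dsum X Y eX eY : dsum n Sg X Y (@dsumZ X Y eX eY).
Proof.
split.
  move=> i hi; do 6 eexists; split; [exact: arr_eta | exact: arr_eta |].
  by rewrite /dsumZ hi.
do 6 eexists; split; [by [] | by [] | exact: castS_eq | exact: castS_eq |].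
by rewrite /dsumZ prednK ?ltnn //; lia.
Qed.

Lemma dsum_obj X Y Z i : dsum n Sg X Y Z -> (i < n)%N -> obj Z i = bp (obj X i) (obj Y i).
Proof.
case=> h1 [a [b [a0 [b0 [f [g [_ _ hX hY hZ]]]]]]] hi.
case: (ltnP i.+1 n) => h.
  have [a1 [a2 [b1 [b2 [f1 [g1 [e1 e2 e3]]]]]]] := h1 i h.
  by rewrite /obj e1 e2 e3.
have -> : i = n.-1 by lia.
by rewrite /obj hX hY hZ.
Qed.

Lemma N_dsum X Y : N X -> N Y -> exists Z, N Z /\ forall i, (i < n)%N -> obj Z i = bp (obj X i) (obj Y i).
Proof.
move=> hX hY; have [_ eX] := N_seq hX; have [_ eY] := N_seq hY.
exists (dsumZ eX eY); split; first exact: (na_dsum hN hX hY (dsumZ_dsum eX eY)).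
move=> i; exact: dsum_obj (dsumZ_dsum eX eY).
Qed.

Lemma clsbp a b : cls (bp a b) = cls a + cls b.
Proof.
have hX := na_triv hN (z:=zero_ob) (A:=a) I (zero_ob_id C) I.
have hY := N_rot (na_triv hN (z:=zero_ob) (A:=b) I (zero_ob_id C) I).
have [Z [hZ hZo]] := N_dsum hX hY.
have hv : forall i : 'I_n, cls (obj Z i) =
   (if nat_of_ord i == 0%N then cls (bp a b) else 0) + (if nat_of_ord i == 1%N then cls a else 0)
   + (if nat_of_ord i == n.-1 then cls (S b) else 0).
  case=> i hi /=; rewrite hZo // obj_rot !obj_triv.
  case: (ltnP i.+1 n) => h1.
    have -> : (i == n.-1) = false by apply/negbTE; lia.
    case: (ltnP 1 i) => h2.
      have -> : (i == 0%N) = false by apply/negbTE; lia.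
      have -> : (i == 1%N) = false by apply/negbTE; lia.
      have h3 : (i < 1)%N = false by apply/negbTE; lia.
      have h4 : (i <= 1)%N = false by apply/negbTE; lia.
      rewrite ?h3 ?h4 !addr0 (cls_iso (iso_bpz _ (zero_ob_id C))) cls0 //.
    case: (eqVneq i 0%N) => [->|h0] /=; first by rewrite !addr0.
    have -> : i = 1%N by lia.
    by rewrite /= add0r addr0 (cls_iso (iso_bpz _ (zero_ob_id C))).
  have -> : (i == n.-1) = true by apply/eqP; lia.
  have -> : (i == 0%N) = false by apply/negbTE; lia.
  have -> : (i == 1%N) = false by apply/negbTE; lia.
  have h3 : (i < 1)%N = false by apply/negbTE; lia.
  have h4 : (i <= 1)%N = false by apply/negbTE; lia.
  by rewrite ?h3 ?h4 !add0r (cls_iso (iso_zbp _ (zero_ob_id C))).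
have := cls_chi hZ.
under eq_bigr => i _ do rewrite hv !sgD.
rewrite !big_split /= !sum_e; try lia.
rewrite sg_last /sg /= clsS => h.
apply/eqP; rewrite -subr_eq0 -h opprD addrA.
by [].
Qed.

Lemma sq0 (x y : Arr C) (a' b' : C) (ex : cod x = a') (ey : cod y = b') :
  commsq (mkA (bpmap (projT2 (projT2 x)) (projT2 (projT2 y)))) (mkA (bp_pl a' b'))
         (mkA (bp_pl (dom x) (dom y))) x.
Proof.
subst a' b'; case: x => a [a1 f]; case: y => b [b1 g] /=; apply: commsq_intro.
rewrite /bpmap compDr !Defs.compA bp_ll bp_lr comp1m !comp0m addr0 //.
Qed.

Lemma sq1 (a b c c' : C) (m : Hom (bp a b) c) (e : c = c') : idm b = 0 ->
  commsq (mkA m) (mkA (idm c')) (mkA (bp_pl a b)) (mkA (comp m (bp_inl a b))).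
Proof.
subst c' => hb; apply: commsq_intro.
by rewrite comp1m -Defs.compA inl_pl // compm1.
Qed.

Lemma isoA_pl (a z : C) : idm z = 0 -> isoA (mkA (bp_pl a z)).
Proof.
move=> hz; exists (bp a z), a, (bp_pl a z); split => //.
exists (bp_inl a z); split; [exact: inl_pl | exact: bp_ll].
Qed.

Lemma absorb X Y : N X -> N Y -> idm (obj Y 0%N) = 0 -> idm (obj Y 1%N) = 0 ->
  exists X', [/\ N X', X' 0%N = X 0%N, obj X' 1%N = obj X 1%N &
    forall i, (2 <= i)%N -> (i < n)%N -> obj X' i = bp (obj X i) (obj Y i)].
Proof.
move=> hX hY hY0 hY1.
have [h1X eX] := N_seq hX; have [h1Y eY] := N_seq hY.
set Z := dsumZ eX eY.
have hZ : N Z := na_dsum hN hX hY (dsumZ_dsum eX eY).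
have hZo := fun i => dsum_obj (i:=i) (dsumZ_dsum eX eY).
have [h1Z _] := N_seq hZ.
pose X' := fun i => if i == 0%N then X 0%N else if i == 1%N then
    mkA (comp (bpmap (projT2 (projT2 (X 1%N))) (projT2 (projT2 (Y 1%N)))) (bp_inl (obj X 1%N) (obj Y 1%N)))
  else if (i.+1 < n)%N then Z i else
    mkA (comp (Sh (bp_pl (obj X 0%N) (obj Y 0%N))) (bpmapS (castS eX) (castS eY))).
pose phi := fun i => if i == 0%N then mkA (bp_pl (obj X 0%N) (obj Y 0%N)) else
  if i == 1%N then mkA (bp_pl (obj X 1%N) (obj Y 1%N)) else mkA (idm (obj Z i)).
have hlast : (n.-1.+1 < n)%N = false by apply/negbTE; lia.
have hl0 : (n.-1 == 0%N) = false by apply/negbTE; lia.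
have hl1 : (n.-1 == 1%N) = false by apply/negbTE; lia.
have hZl : Z n.-1 = mkA (bpmapS (castS eX) (castS eY)) by rewrite /Z /dsumZ hlast.
have hiso : seqiso n Sg Z X' phi.
  split; last first.
    move=> i hi; rewrite /phi; case: i hi => [|[|i]] hi /=.
    - exact: isoA_pl.
    - exact: isoA_pl.
    - exact: isoA_idm.
  split.
  - move=> i hi; rewrite /phi /X'; case: i hi => [|[|i]] hi /=.
    + by split => //; rewrite hZo //; lia.
    + by split => //; rewrite hZo //; lia.
    split => //; rewrite /obj /=; case: ifP => // h.
    have -> : i.+2 = n.-1 by lia.
    by rewrite hZl.
  - move=> i hi; rewrite /phi /X' /=.
    case: i hi => [|[|i]] hi /=.
    + rewrite /Z /dsumZ /= (_ : (1 < n)%N = true); last by lia.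
      exact: sq0 (h1X 0%N _) (h1Y 0%N _).
    + rewrite /Z /dsumZ /= (_ : (2 < n)%N = true); last by lia.
      apply: sq1 hY1.
      have := h1Z 1%N hi; rewrite /Z /dsumZ /= (_ : (2 < n)%N = true) //; lia.
    rewrite hi.
    have -> : (obj Z i.+3) = cod (Z i.+2) by rewrite (h1Z i.+2 hi).
    exact: commsq_id.
  - rewrite /phi /X' hl0 hl1 hlast /= hZl /=.
    rewrite /obj hZl /SA /=; apply: commsq_intro; by rewrite compm1.
exists X'; split.
- exact: (na_iso hN (fun _ _ => I) hZ hiso).
- by [].
- by [].
- move=> i h2 hi; rewrite /obj /X' /=.
  have -> : (i == 0%N) = false by apply/negbTE; lia.
  have -> : (i == 1%N) = false by apply/negbTE; lia.
  case: ifP => h; first by rewrite -/(obj Z i) hZo.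
  have -> : i = n.-1 by lia.
  by [].
Qed.

Local Notation P := (fun A => cls A \in H).

Lemma complete_H : complete n N P.
Proof.
move=> X hX j hj hP.
have := cls_chi hX; rewrite (bigD1 (Ordinal hj)) //= => /eqP; rewrite addr_eq0 => /eqP e.
rewrite -(Hsg j) e; apply: HN; apply: Hsum => i hi; rewrite Hsg; apply: hP => //.
all: try by apply: contra hi => /eqP ei; apply/eqP; apply: val_inj.
Qed.

Lemma ext_step k X : (2 <= k)%N -> (k.+1 < n)%N -> N X ->
  (forall i, (i < k)%N -> cls (obj X i) \in H) ->
  exists X', [/\ N X', X' 0%N = X 0%N & forall i, (i < k.+1)%N -> cls (obj X' i) \in H].
Proof.
move=> hk hkn hX hP.
pose T := triv n Sg zero_ob (obj X k).
have hY : N (iter (n - k) rotn T) := N_iter _ (na_triv hN (z:=zero_ob) (A:=obj X k) I (zero_ob_id C) I).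
have hYo := fun i (hi : (i < n)%N) => obj_iter T (leq_subr k n) hi.
have hY0 : idm (obj (iter (n - k) rotn T) 0%N) = 0.
  rewrite hYo; last lia.
  have -> : (0 + (n - k) < n)%N = true by lia.
  rewrite obj_triv (_ : (0 + (n - k) <= 1)%N = false); last lia.
  exact: zero_ob_id.
have hY1 : idm (obj (iter (n - k) rotn T) 1%N) = 0.
  rewrite hYo; last lia.
  have -> : (1 + (n - k) < n)%N = true by lia.
  rewrite obj_triv (_ : (1 + (n - k) <= 1)%N = false); last lia.
  exact: zero_ob_id.
have [X' [hX' e0 e1 eo]] := absorb hX hY hY0 hY1.
exists X'; split => // i hi.
case: i hi => [|[|i]] hi.
- by rewrite /obj e0; apply: hP; lia.
- by rewrite e1; apply: hP; lia.
rewrite eo ?clsbp ?hYo; try lia.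
case: (ltnP i.+2 k) => h.
  have -> : (i.+2 + (n - k) < n)%N = true by lia.
  rewrite obj_triv (_ : (i.+2 + (n - k) <= 1)%N = false); last by apply/negbTE; lia.
  rewrite cls0 addr0; apply: hP; lia.
have hik : i.+2 = k by lia.
rewrite hik (_ : (k + (n - k) < n)%N = false); last by apply/negbTE; lia.
rewrite (_ : (k + (n - k) - n = 0)%N); last lia.
rewrite obj_triv /= clsS subrr; exact: H0.
Qed.

Lemma ext_H (a b : C) (f : Hom a b) : P a -> P b ->
  exists X, (N X /\ inP n P X) /\ X 0%N = mkA f.
Proof.
move=> ha hb.
have [X0 [hX0 e0]] := na_ext hN f I I.
have hind : forall m, (2 + m <= n.-1)%N -> exists X,
    [/\ N X, X 0%N = mkA f & forall i, (i < 2 + m)%N -> cls (obj X i) \in H].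
  elim=> [|m IH] hm.
    exists X0; split => // i hi.
    case: i hi => [|[|i]] hi //.
      by rewrite /obj e0.
    have [h1 _] := N_seq hX0.
    by rewrite /obj -(h1 0%N) ?e0 //; lia.
  have [X [hX eX hP]] := IH (ltnW hm).
  have [X' [hX' eX' hP']] := ext_step (k := 2 + m) (X := X) (leq_addr _ _) (ltac:(lia)) hX hP.
  by exists X'; split => //; rewrite eX'.
have [X [hX eX hP]] := hind (n - 3)%N (ltac:(lia)).
exists X; split => //; split => //.
move=> i hi; case: (ltnP i n.-1) => h.
  apply: hP; lia.
have -> : i = n.-1 by lia.
apply: complete_H => //; first lia.
move=> j hj hjn; apply: hP; lia.
Qed.

Lemma N_ext X Y : N X -> (forall i, (i < n)%N -> Y i = X i) -> N Y.
Proof.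
move=> hX e.
have [h1 h2] := N_seq hX.
have hl : (n.-1 < n)%N by lia.
have hs : seqiso n Sg X Y (fun i => mkA (idm (obj X i))).
  split; last by move=> i _; apply: isoA_idm.
  split.
  - by move=> i hi; rewrite /obj /= e.
  - move=> i hi; rewrite e; last by lia.
    have -> : (obj X i.+1) = cod (X i) by rewrite (h1 i hi).
    exact: commsq_id.
  - rewrite e // /SA /= Sm_id -h2; exact: commsq_id.
exact: (na_iso hN (fun _ _ => I) hX hs).
Qed.

Lemma main_sub : nang_subcat n Sg N P (fun X => N X /\ inP n P X).
Proof.
split.
- by move=> a b hab /=; rewrite (cls_iso hab).
- split.
  + exists zero_ob; split; [by rewrite /= cls0; exact: H0 | exact: zero_ob_id].
  + by move=> a b /= ha hb; rewrite clsbp; apply: HD.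
  + by move=> a /= ha; rewrite clsS; apply: HN.
  + move=> b /= hb; have [g gK Kg] := So_bij Sg.
    exists (g b); split; last exact: Kg.
    by rewrite /= -(opprK (cls (g b))) -clsS Kg; apply: HN.
  + by move=> X [hX pX]; split => //; apply: N_seq.
  + move=> X Y Z [hX pX] [hY pY] hd; split; first exact: (na_dsum hN hX hY hd).
    move=> i hi; rewrite /= (dsum_obj hd hi) clsbp; apply: HD; [exact: pX | exact: pY].
  + move=> X Y Z sX sY pX pY hd [hZ pZ].
    have [h1 h2] := na_summand hN sX sY (fun _ _ => I) (fun _ _ => I) hd hZ.
    by split; split.
  + move=> X Y phi pY [hX pX] hs; split => //; exact: (na_iso hN (fun _ _ => I) hX hs).
  + move=> z A pz hz pA; split; first exact: (na_triv hN (z:=z) (A:=A) I hz I).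
    by move=> i hi; rewrite /= obj_triv; case: ifP.
  + move=> a b f ha hb; exact: ext_H.
  + move=> X sX pX; split.
      move=> [hX _]; split; first exact: N_rot.
      move=> i hi; rewrite /= obj_rot; case: ifP => h; first exact: pX.
      rewrite clsS; apply: HN; apply: pX; lia.
    move=> [hR _]; split => //.
    by apply/(na_rot hN sX (fun _ _ => I)).
  + move=> X Y f0 f1 [hX _] [hY _]; exact: (na_mor hN hX hY).
  + move=> X Y f0 f1 [hX pX] [hY pY] d0 c0 d1 c1 sq.
    have [phi [Z [p0 p1 hm hc hZ]]] := na_cone hN hX hY d0 c0 d1 c1 sq.
    exists phi, Z; split => //; split => // i hi.
    case: hc => hc1 [a1 [a2 [b1 [bn [al [ph [be [eX0 _ eYl eZl]]]]]]]].
    case: (ltnP i.+1 n) => h.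
      have [a [a' [b [b' [al' [ph' [be' [e1 _ e3 e4]]]]]]]] := hc1 i h.
      have qa := pX i.+1 h; have qb := pY i hi.
      move: qa qb; rewrite /= /obj e1 e3 e4 /= => qa qb.
      by rewrite clsbp; apply: HD.
    have -> : i = n.-1 by lia.
    have qa := pX 0%N (ltac:(lia)); have qb := pY n.-1 (ltac:(lia)).
    move: qa qb; rewrite /= /obj eX0 eYl eZl /= => qa qb.
    by rewrite clsbp clsS; apply: HD => //; apply: HN.
- exists (fun a => idm (S a)); split.
  + by move=> a _; exists (idm (S a)); rewrite comp1m.
  + by move=> a b f _ _; rewrite comp1m compm1.
  + move=> X Y [hX pX] [e1 [c [a [h [eXl eYl]]]]].
    apply: (N_ext hX) => i hi.
    case: (ltnP i.+1 n) => hi1; first exact: e1.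
    have -> : i = n.-1 by lia.
    by rewrite eYl eXl comp1m.
Qed.

Lemma dense_H : dense P.
Proof.
move=> c; exists (bp c (S c)), (S c); split; last exact: iso_refl.
by rewrite /= clsbp clsS subrr; exact: H0.
Qed.

End Main.


Theorem lemma4p5 (n : nat) (C : addcat) (Sg : autom C)
  (N : nsseq C -> Prop) (K : zmodType) (cls : C -> K) (H : {pred K}) :
  (3 <= n)%N -> odd n ->
  nangulated n Sg (fun _ => True) N ->
  is_K0 n N cls ->
  GRing.zmod_closed H ->
  nang_subcat n Sg N (fun A => cls A \in H)
    (fun X => N X /\ inP n (fun A => cls A \in H) X) /\
  complete n N (fun A => cls A \in H) /\
  dense (fun A => cls A \in H).
Proof.
move=> hn hodd hN [hK _] hH; split; first by eapply main_sub; eassumption.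
split; [eapply complete_H; eassumption | eapply dense_H; eassumption].
Qed.
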